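(* Let $T$ be a finite tree with labels in $\{a,\varepsilon\}$ in which every node has at most $2$ children and every leaf and every node with $2$ children is labelled $\varepsilon$. If $T$ contains $n\ge 1$ nodes labelled $a$, then $\mathrm{score}(T)\ge \log_2 n$.
   Context: The score of such a tree is defined recursively: if $T$ is a single leaf (labelled $\varepsilon$), $\mathrm{score}(T)=0$; if the root of $T$ has label $\gamma$ and exactly one child subtree $T_1$, then $\mathrm{score}(T)=\mathrm{score}(T_1)+\iota(\gamma)$ where $\iota(a)=1$, $\iota(\varepsilon)=0$; if the root (labelled $\varepsilon$) has child subtrees $T_1,\dots,T_k$ with $k\ge2$, then $\mathrm{score}(T)=\max_{1\le i\le k}\big(\mathrm{score}(T_i)+\iota\big(\sum_{j\ne i}\mathrm{score}(T_j)\big)\big)$, where for a natural number $x$, $\iota(x)=0$ if $x=0$ and $\iota(x)=1$ if $x>0$. *)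

(* Defs.v *)
From mathcomp Require Import all_boot.
Set Implicit Arguments. Unset Strict Implicit. Unset Printing Implicit Defensive.

Inductive label := La | Leps.

Definition iota_lab (g : label) : nat := if g is La then 1 else 0.

Definition iota_nat (x : nat) : nat := if x is 0 then 0 else 1.

Inductive tree := Node of label & seq tree.

Definition is_eps (g : label) : bool := if g is Leps then true else false.

Fixpoint count_a (t : tree) : nat :=
  match t with Node l ts => iota_lab l + sumn (map count_a ts) end.

Fixpoint wf_tree (t : tree) : bool :=
  match t with
  | Node l ts =>
      [&& size ts <= 2, (size ts != 1) ==> is_eps l & all wf_tree ts]
  end.

(* For k >= 2 children
   with scores s_1..s_k, score = max_i (s_i + iota(sum_{j<>i} s_j)); the sum
   over j <> i is computed as sumn ss - s_i (exact, since s_i <= sumn ss). *)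
Fixpoint score (t : tree) : nat :=
  match t with
  | Node l ts =>
      match ts with
      | [::] => 0
      | [:: t1] => score t1 + iota_lab l
      | _ => let ss := map score ts in
             foldr maxn 0 [seq s + iota_nat (sumn ss - s) | s <- ss]
      end
  end.

(* Main.v *)
Require Import Defs.
From Stdlib Require Import Reals Lra Lia.
Module Aux.
From mathcomp Require Import all_boot zify.

Lemma tree_ind' (P : tree -> Prop) :
  (forall l ts, (forall t, List.In t ts -> P t) -> P (Node l ts)) ->
  forall t, P t.
Proof.
move=> H; refine (fix IH t := match t with Node l ts => H l ts _ end).
refine ((fix G (s : seq tree) : forall u, List.In u s -> P u :=
  match s with [::] => fun u F => False_ind _ F
  | a :: s' => fun u Hu => match Hu with
     | or_introl e => eq_ind a P (IH a) u e
     | or_intror h => G s' u h end end) ts).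
Qed.

Lemma in_all (t : tree) ts : List.In t ts -> all wf_tree ts -> wf_tree t.
Proof. elim: ts => //= a s IHs [->|/IHs h] /andP[] //. Qed.

Lemma arith2 c1 c2 s1 s2 : c1 < 2 ^ s1 -> c2 < 2 ^ s2 ->
  c1 + c2 < 2 ^ maxn (s1 + iota_nat s2) (s2 + iota_nat s1).
Proof.
move: (maxn _ _) (leq_maxl (s1 + iota_nat s2) (s2 + iota_nat s1)) (leq_maxr (s1 + iota_nat s2) (s2 + iota_nat s1)) => m l1 l2.
have e1 : 2 ^ (s1 + iota_nat s2) <= 2 ^ m by rewrite leq_pexp2l.
have e2 : 2 ^ (s2 + iota_nat s1) <= 2 ^ m by rewrite leq_pexp2l.
clear l1 l2; case: s2 e1 e2 => [|s2] e1 e2 h1 h2.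
  rewrite addn0 in e1; rewrite expn0 in h2; lia.
case: s1 e1 e2 h1 => [|s1] e1 e2 h1.
  rewrite addn0 in e2; rewrite expn0 in h1; lia.
simpl in e1, e2; rewrite !addn1 !expnS in e1 e2 h1 h2; lia.
Qed.

Lemma expn_pow a b : expn a b = Nat.pow a b.
Proof. elim: b => // b IH; rewrite expnS IH /= mulnE //. Qed.

Lemma key (T : tree) : wf_tree T -> (count_a T).+1 <= 2 ^ score T.
Proof.
elim/tree_ind': T => l ts IH /=.
case/and3P=> Hs Hl Hall.
have IH' : forall t, List.In t ts -> (count_a t).+1 <= 2 ^ score t.
  by move=> t Ht; apply: IH => //; exact: (in_all _ _ Ht Hall).
case: ts Hs Hl Hall IH IH' => [|t1 [|t2 [|]]] //= _.
- by case: l.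
- move=> _ _ _ IH'; have := IH' t1 (or_introl erefl).
  rewrite addn0; case: l => /=; rewrite ?addn0 // addn1 expnS => h.
  have: 0 < 2 ^ score t1 by rewrite expn_gt0.
  by rewrite add1n mul2n -addnn; lia.
- case: l => //= _ _ _ IH'.
  have h1 := IH' t1 (or_introl erefl).
  have h2 := IH' t2 (or_intror (or_introl erefl)).
  rewrite !addn0 addKn addnK maxn0 add0n.
  exact: arith2.
Qed.

Lemma key_peano (T : tree) (n : nat) :
  wf_tree T = true -> count_a T = n -> (n <= Nat.pow 2 (score T))%coq_nat.
Proof. move=> Hw <-; apply/leP; rewrite -expn_pow; exact: ltnW (key T Hw). Qed.

End Aux.

Theorem mainTheorem6 (T : tree) (n : nat) :
  wf_tree T = true -> count_a T = n -> (1 <= n)%nat ->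
  (ln (INR n) / ln 2 <= INR (score T))%R.
Proof.
intros Hw Hc Hn.
assert (Hle : (INR n <= 2 ^ score T)%R).
{ replace 2%R with (INR 2) by (simpl; ring). rewrite <- pow_INR.
  apply le_INR. exact (Aux.key_peano T n Hw Hc). }
assert (l2 : (0 < ln 2)%R) by (rewrite <- ln_1; apply ln_increasing; lra).
assert (Hn0 : (0 < INR n)%R) by (apply lt_0_INR; lia).
assert (H : (ln (INR n) <= ln (2 ^ score T))%R).
{ destruct (Rle_lt_or_eq_dec _ _ Hle) as [h|h].
  - apply Rlt_le; apply ln_increasing; assumption.
  - rewrite h; lra. }
rewrite ln_pow in H by lra.
apply (Rmult_le_reg_r (ln 2)); [exact l2|].
unfold Rdiv; rewrite Rmult_assoc, Rinv_l by lra; lra.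
Qed.
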